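(* In the setting described in the context, for all $g,g'\in\mathcal{G}$, $$(g'\circ g)_\star\nu=g'_\star\big(g_\star\nu\big).$$
   Context: Let $(\mathcal{X},\Sigma)$ be a measurable space, $\Phi^t$ a flow on $\mathcal{X}$ (bijective measurable maps, $\Phi^{t_1}\circ\Phi^{t_2}=\Phi^{t_1+t_2}$, jointly measurable), $f_\sharp$ push-forward, $\mu$ an invariant probability measure ($\Phi^t_\sharp\mu=\mu$ for all $t$). Let $h^a$, $a>0$, be bijective measurable maps and $\mathcal{G}$ a group of bijective measurable maps of $\mathcal{X}$ with $h^{a_1}\circ h^{a_2}=h^{a_1a_2}$, $\Phi^t\circ g=g\circ\Phi^t$, $g\circ h^a=h^a\circ g$, $\Phi^t\circ h^a=h^a\circ\Phi^{t/a}$ for all $a,a_1,a_2>0$, $t$, $g\in\mathcal{G}$. $\mathcal{Y}\subset\mathcal{X}$ is a representative set: for every $x$ there is a unique $a=A(x)>0$ with $h^a(x)\in\mathcal{Y}$, $A$ measurable with $\int A\,d\mu<\infty$; $P(x)=h^{A(x)}(x)$. Standing assumption: $\int A\circ g\,d\mu<\infty$ for every $g\in\mathcal{G}$. For a measure $\rho$ and positive measurable $B$ with $0<\int B\,d\rho<\infty$, $\rho_B$ is the probability measure with $d\rho_B/d\rho=B/\int B\,d\rho$. Let $\nu=P_\sharp\mu_A$ (the invariant measure of the normalized flow $P\circ\Phi^\tau_A$ on $\mathcal{Y}$). For $g\in\mathcal{G}$ and a probability measure $\rho$ on $\mathcal{Y}$ with $\int A\circ g\,d\rho<\infty$, define $g_\star\rho=(P\circ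 g)_\sharp\rho_{A\circ g}$; under the standing assumption, all measures in the claim are well defined. *)

(* Defs.v *)
From HB Require Import structures.
From mathcomp Require Import all_boot all_order all_algebra.
From mathcomp Require Import all_classical all_reals all_analysis.
Set Implicit Arguments. Unset Strict Implicit. Unset Printing Implicit Defensive.
Import Order.TTheory GRing.Theory Num.Theory.
Local Open Scope classical_set_scope.
Local Open Scope ring_scope.

Section defs.
Context d (T : measurableType d) (R : realType).

Definition dens (rho : set T -> \bar R) (B : T -> R) : set T -> \bar R :=
  fun S => ((\int[rho]_(x in S) (B x)%:E) *
            ((fine (\int[rho]_x (B x)%:E))^-1)%:E)%E.

Definition projP (h : R -> T -> T) (A : T -> R) : T -> T := fun x => h (A x) x.

Definition nuA (h : R -> T -> T) (A : T -> R) (mu : set T -> \bar R) :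
  set T -> \bar R := pushforward (dens mu A) (projP h A).

Definition gstar (h : R -> T -> T) (A : T -> R) (g : T -> T)
  (rho : set T -> \bar R) : set T -> \bar R :=
  pushforward (dens rho (A \o g)) (projP h A \o g).

End defs.

(* Main.v *)
Require Import Defs.
From HB Require Import structures.
From mathcomp Require Import all_boot all_order all_algebra.
From mathcomp Require Import all_classical all_reals all_analysis.
From mathcomp Require Import measurable_realfun.
Import Order.TTheory GRing.Theory Num.Theory.
Local Open Scope classical_set_scope.
Local Open Scope ring_scope.
Set Implicit Arguments. Unset Strict Implicit.

Section helpers.
Context d (T : measurableType d) (R : realType).
Local Open Scope ereal_scope.
Import HBNNSimple.

Lemma eqint (m1 m2 : set T -> \bar R) D (f : T -> \bar R) :
  (forall A, measurable A -> m1 A = m2 A) ->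
  \int[m1]_(x in D) f x = \int[m2]_(x in D) f x.
Proof.
move=> m12.
have e : forall h : {nnsfun T >-> R}, sintegral m1 h = sintegral m2 h.
  by move=> h; rewrite /sintegral; apply: eq_fsbigr => r _; rewrite m12.
rewrite /integral; congr (ereal_sup _ - ereal_sup _); apply: eq_imagel => h _ /=; exact: e.
Qed.

Definition dmeas (m : {measure set T -> \bar R}) (b : T -> R)
  (mb : measurable_fun setT b) (b0 : forall x, (0 <= b x)%R) : set T -> \bar R :=
  fun S => \int[m]_(x in S) (b x)%:E.

Section dm.
Variables (m : {measure set T -> \bar R}) (b : T -> R)
  (mb : measurable_fun setT b) (b0 : forall x, (0 <= b x)%R).
Let dm0 : dmeas m mb b0 set0 = 0.
Proof. by rewrite /dmeas integral_set0. Qed.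
Let dm_ge0 S : 0 <= dmeas m mb b0 S.
Proof. by apply: integral_ge0 => x _; rewrite lee_fin. Qed.
Let dm_sa : semi_sigma_additive (dmeas m mb b0).
Proof.
apply: (@semi_sigma_additive_nng_induced _ _ _ m (fun x => (b x)%:E)).
  exact/measurable_EFinP.
by move=> x; rewrite lee_fin.
Qed.
HB.instance Definition _ := isMeasure.Build _ _ _ (dmeas m mb b0) dm0 dm_ge0 dm_sa.
End dm.

Definition pfm d' (T' : measurableType d') (m : {measure set T' -> \bar R}) (F : T' -> T)
  (mF : measurable_fun setT F) : set T -> \bar R := pushforward m F.

Section pf.
Variables (d' : measure_display) (T' : measurableType d') (m : {measure set T' -> \bar R}) (F : T' -> T)
  (mF : measurable_fun setT F).
Let pf0 : pfm m mF set0 = 0.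
Proof. by rewrite /pfm /pushforward preimage_set0 measure0. Qed.
Let pf_ge0 A : 0 <= pfm m mF A.
Proof. exact: measure_ge0. Qed.
Let pf_sa : semi_sigma_additive (pfm m mF).
Proof.
move=> Fs mFs tF mUF; rewrite /pfm /pushforward preimage_bigcup.
apply: measure_semi_sigma_additive.
- by move=> n; rewrite -[X in measurable X]setTI; exact: mF.
- apply/trivIsetP => /= i j _ _ ij; rewrite -preimage_setI.
  by move/trivIsetP : tF => /(_ _ _ _ _ ij) ->//; rewrite preimage_set0.
- by rewrite -preimage_bigcup -[X in measurable X]setTI; exact: mF.
Qed.
HB.instance Definition _ := isMeasure.Build _ _ _ (pfm m mF) pf0 pf_ge0 pf_sa.
End pf.


Lemma int_dmeas (m : {measure set T -> \bar R}) (b : T -> R)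
  (mb : measurable_fun setT b) (b0 : forall x, (0 <= b x)%R) (f : T -> \bar R) E :
  (forall x, 0 <= f x) -> measurable E -> measurable_fun E f ->
  \int[m]_(x in E) (f x * (b x)%:E) = \int[dmeas m mb b0]_(x in E) f x.
Proof.
move=> f0 mE mf; set g := (fun x => (b x)%:E).
have mg : measurable_fun setT g by exact/measurable_EFinP.
have g0 x : 0 <= g x by rewrite lee_fin.
set nu := dmeas m mb b0.
pose h := nnsfun_approx mE mf.
have -> : \int[nu]_(x in E) f x =
    lim (\int[nu]_(x in E) (EFin \o h n) x @[n --> \oo]).
  have fE x : E x -> f x = lim ((EFin \o h n) x @[n --> \oo]).
    by move=> Ex; apply/esym/cvg_lim => //; exact: cvg_nnsfun_approx.
  under eq_integral => x /[!inE] /fE -> //.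
  apply: monotone_convergence => //.
  - move=> n; apply/measurable_EFinP.
    by apply: (measurable_funS measurableT) => //; exact/measurable_funP.
  - by move=> n x Ex //=; rewrite lee_fin.
  - by move=> x Ex a b' ab; rewrite lee_fin; exact/lefP/nd_nnsfun_approx.
have -> : \int[m]_(x in E) (f \* g) x =
    lim (\int[m]_(x in E) ((EFin \o h n) \* g) x @[n --> \oo]).
  have fg x : E x -> f x * g x = lim (((EFin \o h n) \* g) x @[n --> \oo]).
    by move=> Ex; apply/esym/cvg_lim => //; apply: cvgeZr;
      [by []|exact: cvg_nnsfun_approx].
  under eq_integral => x /[!inE] /fg -> //.
  apply: monotone_convergence => [//| | |].
  - move=> n; apply/emeasurable_funM; apply/measurable_funTS.
      exact/measurable_EFinP.
    exact: mg.
  - by move=> n x Ex /=; rewrite mule_ge0 ?lee_fin.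
  - by move=> x Ex a b' ab/=; rewrite lee_wpmul2r ?lee_fin//; exact/lefP/nd_nnsfun_approx.
suff suf n : \int[m]_(x in E) ((EFin \o h n) x * g x) =
    \int[nu]_(x in E) (EFin \o h n) x.
  by under eq_fun do rewrite suf.
transitivity (\int[nu]_(x in E)
   (\sum_(y \in range (h n)) (y * \1_(h n @^-1` [set y]) x)%:E)); last first.
  by apply: eq_integral => t tE; rewrite /= fimfunE -fsumEFin.
have indich m' r : measurable_fun E (fun x => (r * \1_(h m' @^-1` [set r]) x)%:E).
  by apply: (measurable_comp measurableT) => //; exact: measurable_funM.
rewrite ge0_integral_fsum//; last by move=> m' y Ey; exact: nnfun_muleindic_ge0.
transitivity (\int[m]_(x in E) (\sum_(y \in range (h n))
    (y * \1_(h n @^-1` [set y]) x)%:E * g x)).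
  under [RHS]eq_integral => x xE.
    rewrite -ge0_mule_fsuml => [|y]; last exact: nnfun_muleindic_ge0.
    rewrite fsumEFin // -(fimfunE _ x); over.
  by [].
rewrite ge0_integral_fsum//; last 2 first.
  - move=> y; apply: emeasurable_funM => //; apply: measurable_funTS.
    exact: mg.
  - by move=> m' y Ey; rewrite mule_ge0// nnfun_muleindic_ge0.
apply: eq_fsbigr => r rhn.
under [RHS]eq_integral do rewrite EFinM.
rewrite integralZl_indic_nnsfun => //.
under eq_integral do rewrite EFinM -muleA.
rewrite ge0_integralZl//.
- under eq_integral do rewrite muleC.
  rewrite (eq_integral (g \_ (h n @^-1` [set r]))); last first.
    by move=> x xE; rewrite epatch_indic.
  by rewrite -integral_mkcondr integral_indic// setIC.
- apply: emeasurable_funM; first exact/measurable_EFinP.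
  exact/measurable_funTS/mg.
- by move=> t Et; rewrite mule_ge0 ?lee_fin.
- by move: rhn; rewrite inE => -[t _ <-]; rewrite lee_fin.
Qed.


Lemma Lstep (m : {measure set T -> \bar R}) (rho : set T -> \bar R) (F G : T -> T) (b B : T -> R)
 (mF : measurable_fun setT F) (mG : measurable_fun setT G) (mb : measurable_fun setT b)
 (b0 : forall x, (0 <= b x)%R) (mB : measurable_fun setT B) (B0 : forall x, (0 <= B x)%R)
 (rhoE : forall E, measurable E -> rho E = \int[m]_(x in F @^-1` E) (b x)%:E) :
 forall E, measurable E -> pushforward (dens rho B) G E =
   \int[m]_(x in (G \o F) @^-1` E)
     (B (F x) * b x * (fine (\int[m]_x (B (F x) * b x)%:E))^-1)%:E.
Proof.
have mpre : forall (H : T -> T) D, measurable_fun setT H -> measurable D -> measurable (H @^-1` D).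
  by move=> H D mH mD; rewrite -[X in measurable X]setTI; exact: mH.
have C : forall D, measurable D ->
    \int[rho]_(x in D) (B x)%:E = \int[m]_(x in F @^-1` D) (B (F x) * b x)%:E.
  move=> D mD.
  rewrite (@eqint rho (pfm (dmeas m mb b0) mF)); last by move=> A mA; rewrite rhoE.
  rewrite /pfm ge0_integral_pushforward //; last 2 first.
  - exact/measurable_funTS/measurable_EFinP.
  - by move=> x _; rewrite lee_fin.
  rewrite -int_dmeas //.
  - by move=> x; rewrite /= lee_fin.
  - exact: mpre.
  - apply/measurable_funTS/measurable_EFinP; exact: measurableT_comp.
move=> E mE; rewrite /pushforward /dens.
rewrite C; last exact: mpre.
rewrite C // preimage_setT.
rewrite -ge0_integralZr; last 4 first.
- exact: mpre (mpre _ _ mG mE).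
- apply/measurable_funTS/measurable_EFinP; apply: measurable_funM => //.
  exact: measurableT_comp.
- by move=> x _; rewrite lee_fin mulr_ge0.
- rewrite lee_fin invr_ge0 fine_ge0 // integral_ge0 // => x _.
  by rewrite lee_fin mulr_ge0.
rewrite (_ : (G \o F) @^-1` E = F @^-1` (G @^-1` E)) //.
Qed.


Lemma int_pos (mu : probability T R) (f : T -> R) : measurable_fun setT f ->
  (forall x, (0 < f x)%R) -> \int[mu]_x (f x)%:E < +oo ->
  (0 < fine (\int[mu]_x (f x)%:E))%R.
Proof.
move=> mf f0 fo.
have I0 : 0 <= \int[mu]_x (f x)%:E by apply: integral_ge0 => x _; rewrite lee_fin ltW.
apply: fine_gt0; rewrite fo andbT lt_neqAle I0 andbT.
apply/eqP => /esym I00.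
have : \int[mu]_(x in setT) `|(f x)%:E| = 0.
  by rewrite -I00; apply: eq_integral => x _; rewrite gee0_abs // lee_fin ltW.
have mEf : measurable_fun setT (EFin \o f) by exact/measurable_EFinP.
move/(ae_eq_integral_abs mu measurableT mEf).
case=> N [mN muN sub].
have : mu setT <= mu N.
  apply: le_measure; rewrite ?inE //.
  move=> x _; apply: sub => /= /(_ I).
  by move=> [] /eqP; rewrite gt_eqF.
by rewrite muN probability_setT lee_fin ler10.
Qed.


Lemma intZ (m : {measure set T -> \bar R}) (U v : T -> R) c :
  (forall x, U x = c * v x)%R -> (0 <= c)%R -> measurable_fun setT v ->
  (forall x, 0 <= v x)%R -> \int[m]_x (v x)%:E < +oo ->
  fine (\int[m]_x (U x)%:E) = (c * fine (\int[m]_x (v x)%:E))%R.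
Proof.
move=> Ue c0 mv v0 vo.
rewrite (eq_integral (fun x => c%:E * (v x)%:E)); last by move=> x _; rewrite Ue EFinM.
rewrite ge0_integralZl //; last 2 first.
- exact/measurable_EFinP.
- by move=> x _; rewrite lee_fin.
rewrite fineM //.
by rewrite ge0_fin_numE // integral_ge0 // => x _; rewrite lee_fin.
Qed.

Lemma Qnorm (m : {measure set T -> \bar R}) D (U v : T -> R) c :
  (forall x, U x = c * v x)%R -> (0 < c)%R -> measurable_fun setT v ->
  (forall x, 0 <= v x)%R -> \int[m]_x (v x)%:E < +oo ->
  \int[m]_(x in D) (U x * (fine (\int[m]_x (U x)%:E))^-1)%:E =
  \int[m]_(x in D) (v x * (fine (\int[m]_x (v x)%:E))^-1)%:E.
Proof.
move=> Ue c0 mv v0 vo.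
rewrite (intZ Ue (ltW c0)) //.
apply: eq_integral => x _; rewrite Ue invfM mulrACA mulfV ?mul1r // gt_eqF //.
Qed.

Lemma kge0 (m : {measure set T -> \bar R}) (U : T -> R) :
  (forall x, 0 <= U x)%R -> (0 <= (fine (\int[m]_x (U x)%:E))^-1)%R.
Proof.
move=> U0; rewrite invr_ge0 fine_ge0 // integral_ge0 // => x _.
by rewrite lee_fin.
Qed.

End helpers.

Theorem corollary1 (d : measure_display) (T : measurableType d) (R : realType)
  (Phi : R -> T -> T) (h : R -> T -> T) (G : set (T -> T))
  (mu : probability T R) (Y : set T) (A : T -> R)
  (* flow *)
  (Phi_bij : forall t, bijective (Phi t))
  (Phi_meas : forall t, measurable_fun setT (Phi t))
  (Phi_add : forall t1 t2, Phi t1 \o Phi t2 = Phi (t1 + t2))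
  (Phi_joint : measurable_fun setT (fun p : R * T => Phi p.1 p.2))
  (* invariant probability measure *)
  (mu_inv : forall t S, measurable S -> mu (Phi t @^-1` S) = mu S)
  (* the maps h^a, a > 0 *)
  (h_bij : forall a, 0 < a -> bijective (h a))
  (h_meas : forall a, 0 < a -> measurable_fun setT (h a))
  (h_mul : forall a1 a2, 0 < a1 -> 0 < a2 -> h a1 \o h a2 = h (a1 * a2))
  (* the group G *)
  (G_bij : forall g, G g -> bijective g)
  (G_meas : forall g, G g -> measurable_fun setT g)
  (G_id : G id)
  (G_comp : forall g1 g2, G g1 -> G g2 -> G (g1 \o g2))
  (G_inv : forall g, G g -> exists2 g', G g' & cancel g g' /\ cancel g' g)
  (* commutation relations *)
  (Phi_G : forall t g, G g -> Phi t \o g = g \o Phi t)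
  (G_h : forall g a, G g -> 0 < a -> g \o h a = h a \o g)
  (Phi_h : forall t a, 0 < a -> Phi t \o h a = h a \o Phi (t / a))
  (* representative set Y, with A(x) the unique a > 0 with h^a(x) in Y *)
  (A_pos : forall x, 0 < A x)
  (A_Y : forall x, Y (h (A x) x))
  (A_uniq : forall x a, 0 < a -> Y (h a x) -> a = A x)
  (A_meas : measurable_fun setT A)
  (A_int : (\int[mu]_x (A x)%:E < +oo)%E)
  (P_meas : measurable_fun setT (projP h A))
  (* standing assumption *)
  (AG_int : forall g, G g -> (\int[mu]_x (A (g x))%:E < +oo)%E) :
  forall g g', G g -> G g' ->
  forall S, measurable S ->
    gstar h A (g' \o g) (nuA h A mu) S
    = gstar h A g' (gstar h A g (nuA h A mu)) S.

Proof.
move=> g g' Gg Gg' S mS.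
pose P := projP h A.
have AhE : forall b y, 0 < b -> A (h b y) = A y / b.
  move=> b y b0; apply/esym/A_uniq; first by rewrite divr_gt0.
  have e := congr1 (fun f => f y) (h_mul (A y / b) b (divr_gt0 (A_pos y) b0) b0).
  rewrite /= in e; rewrite e divfK ?gt_eqF //.
have PhE : forall b y, 0 < b -> P (h b y) = P y.
  move=> b y b0; rewrite /P /projP AhE //.
  have e := congr1 (fun f => f y) (h_mul (A y / b) b (divr_gt0 (A_pos y) b0) b0).
  by rewrite /= in e; rewrite e divfK ?gt_eqF.
have gP : forall k x, G k -> k (P x) = h (A x) (k x).
  by move=> k x Gk; exact: (congr1 (fun f => f x) (G_h k (A x) Gk (A_pos x))).
have AkP : forall k x, G k -> A (k (P x)) = A (k x) / A x.
  by move=> k x Gk; rewrite gP // AhE.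
have PkP : forall k x, G k -> P (k (P x)) = P (k x).
  by move=> k x Gk; rewrite gP // PhE.
have Ggg := G_comp g' g Gg' Gg.
have mg := G_meas g Gg. have mg' := G_meas g' Gg'. have mgg := G_meas _ Ggg.
have mP : measurable_fun setT P := P_meas.
have A0 : forall x, 0 <= A x by move=> x; exact: ltW.
have L0 : forall E, measurable E ->
    mu E = (\int[mu]_(x in id @^-1` E) ((fun _ : T => (1:R)) x)%:E)%E.
  by move=> E mE; rewrite integral_cst // mul1e.
have m1 : measurable_fun setT (fun _ : T => (1:R)) by exact: measurable_cst.
have p1 : forall x : T, 0 <= (fun _ : T => (1:R)) x by move=> x; exact: ler01.
have N1 := @Lstep d T R mu mu id P (fun _ : T => (1:R)) A (@measurable_id _ _ setT) mP m1 p1 A_meas A0 L0.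
pose k0 := (fine (\int[mu]_x (A (id x) * (fun _ : T => (1:R)) x)%:E)%E)^-1.
pose b1 := fun x => A (id x) * (fun _ => (1:R)) x * k0.
have k0ge0 : 0 <= k0 by apply: kge0 => x; rewrite mulr1.
have mb1 : measurable_fun setT b1.
  by apply: measurable_funM => //; apply: measurable_funM.
have b10 : forall x, 0 <= b1 x by move=> x; rewrite /b1 mulr1 mulr_ge0.
have mAg := measurableT_comp A_meas mg.
have mAg' := measurableT_comp A_meas mg'.
have mAgg := measurableT_comp A_meas mgg.
have mPg := measurableT_comp mP mg.
have mPg' := measurableT_comp mP mg'.
have mPgg := measurableT_comp mP mgg.
have mPid : measurable_fun setT (P \o id) := measurableT_comp mP (@measurable_id _ _ setT).
have N2 := @Lstep d T R mu (nuA h A mu) (P \o id) (P \o g) b1 (A \o g)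
   mPid mPg mb1 b10 mAg (fun x => A0 _) N1.
pose k1 := (fine (\int[mu]_x ((A \o g) ((P \o id) x) * b1 x)%:E)%E)^-1.
pose b2 := fun x => (A \o g) ((P \o id) x) * b1 x * k1.
have k1ge0 : 0 <= k1 by apply: kge0 => x; apply: mulr_ge0; [exact: A0|exact: b10].
have mb2 : measurable_fun setT b2.
  apply: measurable_funM => //; apply: measurable_funM => //.
  exact: measurableT_comp.
have b20 : forall x, 0 <= b2 x.
  by move=> x; apply: mulr_ge0 => //; apply: mulr_ge0; [exact: A0|exact: b10].
have mF2 : measurable_fun setT ((P \o g) \o (P \o id)) := measurableT_comp mPg mPid.
have RHS := @Lstep d T R mu (gstar h A g (nuA h A mu)) ((P \o g) \o (P \o id)) (P \o g')
   b2 (A \o g') mF2 mPg' mb2 b20 mAg' (fun x => A0 _) N2 S mS.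
have LHS := @Lstep d T R mu (nuA h A mu) (P \o id) (P \o (g' \o g)) b1 (A \o (g' \o g))
   mPid mPgg mb1 b10 mAgg (fun x => A0 _) N1 S mS.
change (pushforward (dens (nuA h A mu) (A \o (g' \o g))) (P \o (g' \o g)) S =
  pushforward (dens (gstar h A g (nuA h A mu)) (A \o g')) (P \o g') S).
rewrite LHS RHS.
have pw : forall k x, G k -> A (k (P x)) * b1 x = k0 * A (k x).
  move=> k x Gk; rewrite /b1 /= mulr1 AkP // mulrA divfK ?gt_eqF // mulrC //.
have k0pos : 0 < k0.
  rewrite /k0 (@intZ d T R mu _ A 1) //; last by move=> x; rewrite /= mulr1 mul1r.
  by rewrite mul1r invr_gt0 int_pos.
have k1pos : 0 < k1.
  rewrite /k1 (@intZ d T R mu _ (A \o g) k0) //; last 3 first.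
  - by move=> x; exact: (pw g x Gg).
  - by move=> x; exact: A0.
  - exact: AG_int.
  by rewrite invr_gt0 mulr_gt0 // int_pos //; [move=> y; exact: A_pos | exact: AG_int].
have v0 : forall x, 0 <= A (g' (g x)) by move=> x; exact: A0.
have mv : measurable_fun setT (fun x => A (g' (g x))) := mAgg.
have vo := AG_int _ Ggg.
have QL := @Qnorm d T R mu (((P \o (g' \o g)) \o (P \o id)) @^-1` S)
  (fun x => (A \o (g' \o g)) ((P \o id) x) * b1 x) (fun x => A (g' (g x))) k0
  (fun x => pw _ x Ggg) k0pos mv v0 vo.
have Ue2 : forall x, (A \o g') (((P \o g) \o (P \o id)) x) * b2 x = k0 * k1 * A (g' (g x)).
  move=> x; rewrite /b2 /= pw // PkP // AkP //.
  rewrite [k0 * A (g x)]mulrC -[A (g x) * k0 * k1]mulrA mulrA divfK ?gt_eqF //.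
  by rewrite mulrC.
have QR := @Qnorm d T R mu (((P \o g') \o ((P \o g) \o (P \o id))) @^-1` S)
  (fun x => (A \o g') (((P \o g) \o (P \o id)) x) * b2 x) (fun x => A (g' (g x))) (k0 * k1)
  Ue2 (mulr_gt0 k0pos k1pos) mv v0 vo.
apply: etrans; first exact: QL.
apply: esym; apply: etrans; first exact: QR.
apply: esym.
congr (integral _ _ _).
apply/funext => x /=.
rewrite (PkP g x Gg) (PkP g' (g x) Gg').
have := PkP _ x Ggg => /= ->.
by [].
Qed.
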